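(* Let $k,\ell$ be positive integers, $e=(1,\dots,1)^\top\in\mathbb R^k$, and $(\Omega,\mathcal F,\mathcal P)$ a probability space. Let $A(\omega)\in\mathbb R^{k\times k}$, $B(\omega)\in\mathbb R^{k\times\ell}$, $C(\omega)\in\mathbb R^{\ell\times k}$, $D(\omega)\in\mathbb R^{\ell\times\ell}$, $p(\omega)\in\mathbb R^k$, $q(\omega)\in\mathbb R^\ell$ depend measurably on $\omega\in\Omega$, and set $F(x,u,\omega)=\big(A(\omega)x+B(\omega)u+p(\omega),\ C(\omega)x+D(\omega)u+q(\omega)\big)$. Define $$\widetilde F_1(x,u,t,\omega)=A(\omega)(x+te)+B(\omega)u+p(\omega)\in\mathbb R^k,$$ $$\widetilde F_2(x,u,t,\omega)=\begin{pmatrix}[tC(\omega)+ue^\top A(\omega)](x+te)+ue^\top[B(\omega)u+p(\omega)]+t[D(\omega)u+q(\omega)]\\ t^2-\|u\|^2\end{pmatrix}\in\mathbb R^{\ell+1}.$$ Let $x\in\mathbb R^k$, $u\in\mathbb R^\ell$, $z=(x,u)$, and suppose $u\ne0$ and $C(\omega)x+D(\omega)u+q(\omega)\neq0$. Then $z$ is a solution of the stochastic linear complementarity problem on $L(k,\ell)$, i.e. almost surely in $\omega$, $$(x,u)\in L(k,\ell),\quad F(x,u,\omega)\in M(k,\ell),\quad \langle (x,u),F(x,u,\omega)\rangle=0,$$ if and only if there exists $t>0$ such that $\tilde z:=(x-te,u,t)\in\mathbb R^{k+\ell+1}$ is a solution of the stochastic mixed complementarity problem, i.e., writing $\tilde x=x-te$,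 almost surely in $\omega$, $$\widetilde F_2(\tilde x,u,t,\omega)=0,\quad \tilde x\ge0,\quad \widetilde F_1(\tilde x,u,t,\omega)\ge0,\quad \tilde x^\top\widetilde F_1(\tilde x,u,t,\omega)=0.$$
   Context: $\|\cdot\|$ is the Euclidean norm and $\langle\cdot,\cdot\rangle$ the standard inner product on $\mathbb R^k\times\mathbb R^\ell$. The extended second order cone is $L(k,\ell)=\{(x,u)\in\mathbb R^k\times\mathbb R^\ell: x\ge\|u\|e\}$ (componentwise inequality) and its dual is $M(k,\ell)=\{(x,u)\in\mathbb R^k\times\mathbb R^\ell: e^\top x\ge\|u\|,\ x\ge0\}$. *)

(* Defs.v *)
From HB Require Import structures.
From mathcomp Require Import all_boot all_order all_algebra.
From mathcomp Require Import all_classical all_reals all_analysis.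
Set Implicit Arguments. Unset Strict Implicit. Unset Printing Implicit Defensive.
Import Order.TTheory GRing.Theory Num.Theory.
Local Open Scope ring_scope.

Section SLCP.
Variable R : realType.

Definition enorm n (v : 'cV[R]_n) : R := Num.sqrt (\sum_i (v i 0) ^+ 2).

Definition evec k : 'cV[R]_k := const_mx 1.

Definition ip k l (x : 'cV[R]_k) (u : 'cV[R]_l) (y : 'cV[R]_k) (v : 'cV[R]_l) : R :=
  \sum_i x i 0 * y i 0 + \sum_j u j 0 * v j 0.

(* extended second order cone L(k,l) = {(x,u) : x >= ||u|| e} *)
Definition inL k l (x : 'cV[R]_k) (u : 'cV[R]_l) : Prop :=
  forall i, enorm u <= x i 0.

(* its dual M(k,l) = {(x,u) : e^T x >= ||u||, x >= 0} *)
Definition inM k l (x : 'cV[R]_k) (u : 'cV[R]_l) : Prop :=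
  enorm u <= \sum_i x i 0 /\ forall i, 0 <= x i 0.

Definition F1 k l (A : 'M[R]_k) (B : 'M[R]_(k,l)) (p : 'cV[R]_k)
  (x : 'cV[R]_k) (u : 'cV[R]_l) : 'cV[R]_k := A *m x + B *m u + p.
Definition F2 k l (C : 'M[R]_(l,k)) (D : 'M[R]_l) (q : 'cV[R]_l)
  (x : 'cV[R]_k) (u : 'cV[R]_l) : 'cV[R]_l := C *m x + D *m u + q.

Definition Ft1 k l (A : 'M[R]_k) (B : 'M[R]_(k,l)) (p : 'cV[R]_k)
  (x : 'cV[R]_k) (u : 'cV[R]_l) (t : R) : 'cV[R]_k :=
  A *m (x + t *: evec k) + B *m u + p.

Definition Ft2 k l (A : 'M[R]_k) (B : 'M[R]_(k,l)) (C : 'M[R]_(l,k)) (D : 'M[R]_l)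
  (p : 'cV[R]_k) (q : 'cV[R]_l) (x : 'cV[R]_k) (u : 'cV[R]_l) (t : R)
  : 'cV[R]_(l + 1) :=
  col_mx
    ((t *: C + u *m ((evec k)^T *m A)) *m (x + t *: evec k)
       + u *m ((evec k)^T *m (B *m u + p)) + t *: (D *m u + q))
    ((t ^+ 2 - enorm u ^+ 2)%:M).

End SLCP.

(* Main.v *)
Require Import Defs.
From HB Require Import structures.
From mathcomp Require Import all_boot all_order all_algebra.
From mathcomp Require Import all_classical all_reals all_analysis.
Import Order.TTheory GRing.Theory Num.Theory.
From mathcomp Require Import lra ring.
Local Open Scope ring_scope.

Set Implicit Arguments. Unset Strict Implicit.
Section H.
Variable R : realType.

Lemma enorm_sq n (u : 'cV[R]_n) : enorm u ^+ 2 = \sum_i u i 0 ^+ 2.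
Proof. by rewrite /enorm sqr_sqrtr // sumr_ge0 // => i _; rewrite sqr_ge0. Qed.

Lemma enorm_ge0 n (u : 'cV[R]_n) : 0 <= enorm u.
Proof. exact: sqrtr_ge0. Qed.

Lemma enorm_gt0 n (u : 'cV[R]_n) : u != 0 -> 0 < enorm u.
Proof.
move=> hu; rewrite lt_neqAle enorm_ge0 andbT; apply/eqP => h.
move/negP: hu; apply; apply/eqP/matrixP => i j; rewrite ord1 mxE.
have : \sum_i u i 0 ^+ 2 = 0 by rewrite -enorm_sq -h expr0n.
move/psumr_eq0P => H; apply/eqP; rewrite -sqrf_eq0; apply/eqP; apply: H => //.
by move=> k _; rewrite sqr_ge0.
Qed.

Lemma mx1_eq0 (M : 'M[R]_1) : M = 0 <-> M 0 0 = 0.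
Proof.
split=> [->|h]; first by rewrite mxE.
by apply/matrixP => i j; rewrite !ord1 h mxE.
Qed.

Lemma cv_eq0 n (v : 'cV[R]_n) : v = 0 <-> forall j, v j 0 = 0.
Proof.
split=> [-> j|h]; first by rewrite mxE.
by apply/matrixP => i j; rewrite ord1 h mxE.
Qed.

Lemma Ft1E k l (A : 'M[R]_k) B p x (u : 'cV[R]_l) t :
  Ft1 A B p (x - t *: evec R k) u t = F1 A B p x u.
Proof. by rewrite /Ft1 subrK. Qed.

Lemma eTy k (y : 'cV[R]_k) : ((evec R k)^T *m y) = (\sum_i y i 0)%:M.
Proof.
apply/matrixP => i j; rewrite !ord1 !mxE /=.
by apply: eq_bigr => m _; rewrite !mxE mul1r.
Qed.

Lemma Ft2E k l (A : 'M[R]_k) B C D p q x (u : 'cV[R]_l) t :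
  Ft2 A B C D p q (x - t *: evec R k) u t =
  col_mx (t *: F2 C D q x u + (\sum_i F1 A B p x u i 0) *: u)
         ((t ^+ 2 - enorm u ^+ 2)%:M).
Proof.
rewrite /Ft2 subrK; congr col_mx.
have -> : (\sum_i F1 A B p x u i 0) *: u = u *m ((evec R k)^T *m F1 A B p x u).
  by rewrite eTy mul_mx_scalar.
rewrite /F1 /F2.
rewrite mulmxDl -scalemxAl -!mulmxA !mulmxDr !scalerDr.
by rewrite (AC ((2*2)*2)%AC ((1*5*6)*(2*3*4))%AC).
Qed.


Definition P1 k l (x y : 'cV[R]_k) (u v : 'cV[R]_l) :=
  (forall i, enorm u <= x i 0) /\ (enorm v <= \sum_i y i 0 /\ forall i, 0 <= y i 0) /\
  (\sum_i x i 0 * y i 0 + \sum_j u j 0 * v j 0 = 0).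

Definition Qs k l (x y : 'cV[R]_k) (u v : 'cV[R]_l) (t : R) :=
  (forall j, t * v j 0 + (\sum_i y i 0) * u j 0 = 0) /\ t ^+ 2 = enorm u ^+ 2 /\
  (forall i, 0 <= x i 0 - t) /\ (forall i, 0 <= y i 0) /\
  \sum_i (x i 0 - t) * y i 0 = 0.

Lemma sumD k (x y : 'cV[R]_k) c :
  \sum_i (x i 0 - c) * y i 0 = \sum_i x i 0 * y i 0 - c * \sum_i y i 0.
Proof. rewrite mulr_sumr -sumrB; apply: eq_bigr => i _; ring. Qed.

Lemma sum_uv l (u v : 'cV[R]_l) c d :
  (forall j, c * v j 0 + d * u j 0 = 0) ->
  c * \sum_j u j 0 * v j 0 = - d * enorm u ^+ 2.
Proof.
move=> h; rewrite enorm_sq !mulr_sumr; apply: eq_bigr => j _.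
have := h j; move=> hj.
have -> : c * (u j 0 * v j 0) = u j 0 * (c * v j 0) by ring.
have -> : c * v j 0 = - (d * u j 0) by apply/eqP; rewrite -subr_eq0 opprK hj.
ring.
Qed.

Lemma sq_ge0_sum n (f : 'I_n -> R) : 0 <= \sum_i f i ^+ 2.
Proof. by apply: sumr_ge0 => i _; rewrite sqr_ge0. Qed.

Lemma expand l (u v : 'cV[R]_l) (n s : R) :
  \sum_j (n * v j 0 + s * u j 0) ^+ 2 =
     n ^+ 2 * \sum_j v j 0 ^+ 2 + 2 * n * s * \sum_j u j 0 * v j 0 + s ^+ 2 * \sum_j u j 0 ^+ 2.
Proof. rewrite !mulr_sumr -!big_split; apply: eq_bigr => j _ /=; ring. Qed.

Lemma sum_sq_scale l (u v : 'cV[R]_l) (c d : R) :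
  (forall j, c * v j 0 + d * u j 0 = 0) ->
  c ^+ 2 * \sum_j v j 0 ^+ 2 = d ^+ 2 * \sum_j u j 0 ^+ 2.
Proof.
move=> h; rewrite !mulr_sumr; apply: eq_bigr => j _.
have -> : c ^+ 2 * v j 0 ^+ 2 = (c * v j 0) ^+ 2 by ring.
have -> : c * v j 0 = - (d * u j 0) by apply/eqP; rewrite -subr_eq0 opprK h.
ring.
Qed.

Lemma fwd k l (x y : 'cV[R]_k) (u v : 'cV[R]_l) :
  u != 0 -> P1 x y u v -> Qs x y u v (enorm u).
Proof.
move=> hu [hL [[hm hy] hip]].
have hn := enorm_gt0 hu.
set n := enorm u in hn hL hip *.
set s := \sum_i y i 0 in hm *.
set a := \sum_j u j 0 * v j 0 in hip.
set X := \sum_i x i 0 * y i 0 in hip.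
have hs : 0 <= s by apply: sumr_ge0.
have hX : n * s <= X.
  rewrite -subr_ge0 -sumD; apply: sumr_ge0 => i _; apply: mulr_ge0 => //.
  by rewrite subr_ge0.
have hm0 := enorm_ge0 v.
have hw : \sum_j (n * v j 0 + s * u j 0) ^+ 2 <= 0.
  have -> : \sum_j (n * v j 0 + s * u j 0) ^+ 2 =
     n ^+ 2 * \sum_j v j 0 ^+ 2 + 2 * n * s * a + s ^+ 2 * \sum_j u j 0 ^+ 2.
    exact: expand.
  rewrite -!enorm_sq -/n.
  have h1 : 0 <= n * s by apply: mulr_ge0 => //; apply: ltW.
  have h2 : a <= - (n * s) by lra.
  have h3 : 2 * n * s * a <= - 2 * (n * s) ^+ 2 by nra.
  have h4 : enorm v ^+ 2 <= s ^+ 2 by nra.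
  nra.
have hw0 : forall j, n * v j 0 + s * u j 0 = 0.
  move=> j; apply/eqP; rewrite -sqrf_eq0; apply/eqP.
  have := (psumr_eq0P (P := predT) (fun i _ => sqr_ge0 (n * v i 0 + s * u i 0))).
  move=> H; apply: H => //; apply/le_anti; rewrite hw /=; exact: sq_ge0_sum.
have ha : n * a = - s * n ^+ 2 by apply: sum_uv.
have ha' : a = - s * n.
  apply: (mulfI (lt0r_neq0 hn)); rewrite ha; ring.
split; first by [].
split; first by [].
split; first by move=> i; rewrite subr_ge0.
split; first by [].
rewrite sumD -/X -/s; lra.
Qed.

Lemma bwd k l (x y : 'cV[R]_k) (u v : 'cV[R]_l) t :
  0 < t -> Qs x y u v t -> P1 x y u v.
Proof.
move=> ht [hw [htn [hx [hy hsum]]]].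
have hn0 := enorm_ge0 u.
have htn' : t = enorm u.
  apply/eqP; rewrite -subr_eq0.
  have : (t - enorm u) * (t + enorm u) = 0 by rewrite -subr_sqr htn subrr.
  by move/eqP; rewrite mulf_eq0 => /orP [//|]; rewrite gt_eqF // ltr_pwDl.
set s := \sum_i y i 0 in hw hsum *.
have hs : 0 <= s by apply: sumr_ge0.
have hm0 := enorm_ge0 v.
have hv : t ^+ 2 * enorm v ^+ 2 = s ^+ 2 * enorm u ^+ 2.
  by rewrite !enorm_sq; apply: sum_sq_scale.
have hvs : enorm v = s.
  rewrite -htn' in hv.
  have ht2 : 0 < t ^+ 2 by rewrite exprn_gt0.
  have : enorm v ^+ 2 = s ^+ 2.
    by apply: (mulfI (lt0r_neq0 ht2)); rewrite hv mulrC.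
  move/eqP; rewrite eqf_sqr => /orP [/eqP //|/eqP h]; lra.
have ha := sum_uv hw.
split; first by move=> i; rewrite -htn' -subr_ge0.
split; first by split; [rewrite hvs|].
move: hsum; rewrite sumD => hsum.
have ha' : \sum_j u j 0 * v j 0 = - s * t.
  apply: (mulfI (lt0r_neq0 ht)); rewrite ha -htn'; ring.
rewrite ha'; rewrite -/s in hsum; lra.
Qed.


Lemma Qmx k l (A : 'M[R]_k) (B : 'M[R]_(k, l)) (C : 'M[R]_(l, k)) (D : 'M[R]_l)
  (p : 'cV[R]_k) (q : 'cV[R]_l) (x : 'cV[R]_k) (u : 'cV[R]_l) (t : R) :
  (let xt := x - t *: evec R k in
       Ft2 A B C D p q xt u t = 0 /\
       (forall i, 0 <= xt i 0) /\
       (forall i, 0 <= Ft1 A B p xt u t i 0) /\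
       xt^T *m Ft1 A B p xt u t = 0) <->
  Qs x (F1 A B p x u) u (F2 C D q x u) t.
Proof.
rewrite /= Ft1E Ft2E.
have xtE : forall i, (x - t *: evec R k) i 0 = x i 0 - t.
  by move=> i; rewrite !mxE mulr1.
have E1 : (col_mx (t *: F2 C D q x u + (\sum_i F1 A B p x u i 0) *: u)
         ((t ^+ 2 - enorm u ^+ 2)%:M) = 0) <->
     ((forall j, t * F2 C D q x u j 0 + (\sum_i F1 A B p x u i 0) * u j 0 = 0)
      /\ t ^+ 2 = enorm u ^+ 2).
  split.
    move/eqP; rewrite col_mx_eq0 => /andP [/eqP h1 /eqP h2]; split.
      by move=> j; have := h1; move/cv_eq0/(_ j); rewrite !mxE.
    by move/mx1_eq0: h2; rewrite !mxE /= mulr1n => /eqP; rewrite subr_eq0 => /eqP.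
  case=> h1 h2; apply/eqP; rewrite col_mx_eq0; apply/andP; split; apply/eqP.
    apply/cv_eq0 => j; move: (h1 j); rewrite !mxE; done.
  by apply/mx1_eq0; rewrite !mxE /= mulr1n h2 subrr.
have E2 : ((x - t *: evec R k)^T *m F1 A B p x u = 0) <->
          (\sum_i (x i 0 - t) * F1 A B p x u i 0 = 0).
  rewrite mx1_eq0 !mxE.
  have -> : \sum_j (x - t *: evec R k)^T 0 j * F1 A B p x u j 0 =
            \sum_i (x i 0 - t) * F1 A B p x u i 0.
    by apply: eq_bigr => i _; rewrite mxE xtE.
  by [].
rewrite E1 E2 /Qs.
split.
  case=> [[h1 h2] [h3 [h4 h5]]]; do !split => //.
  by move=> i; rewrite -xtE.
case=> [h1 [h2 [h3 [h4 h5]]]]; do !split => //.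
by move=> i; rewrite xtE.
Qed.

End H.

Theorem mainTheorem3 (R : realType) (d : measure_display) (Omega : measurableType d)
  (P : probability Omega R) (k l : nat) (hk : (0 < k)%N) (hl : (0 < l)%N)
  (A : Omega -> 'M[R]_k) (B : Omega -> 'M[R]_(k, l))
  (C : Omega -> 'M[R]_(l, k)) (D : Omega -> 'M[R]_l)
  (p : Omega -> 'cV[R]_k) (q : Omega -> 'cV[R]_l)
  (mA : forall i j, measurable_fun setT (fun w => A w i j))
  (mB : forall i j, measurable_fun setT (fun w => B w i j))
  (mC : forall i j, measurable_fun setT (fun w => C w i j))
  (mD : forall i j, measurable_fun setT (fun w => D w i j))
  (mp : forall i j, measurable_fun setT (fun w => p w i j))
  (mq : forall i j, measurable_fun setT (fun w => q w i j))
  (x : 'cV[R]_k) (u : 'cV[R]_l)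
  (hu : u != 0)
  (hCDq : forall w, F2 (C w) (D w) (q w) x u != 0) :
  {ae P, forall w,
     inL x u /\
     inM (F1 (A w) (B w) (p w) x u) (F2 (C w) (D w) (q w) x u) /\
     ip x u (F1 (A w) (B w) (p w) x u) (F2 (C w) (D w) (q w) x u) = 0}
  <->
  exists t : R, 0 < t /\
    {ae P, forall w,
       let xt := x - t *: evec R k in
       Ft2 (A w) (B w) (C w) (D w) (p w) (q w) xt u t = 0 /\
       (forall i, 0 <= xt i 0) /\
       (forall i, 0 <= Ft1 (A w) (B w) (p w) xt u t i 0) /\
       xt^T *m Ft1 (A w) (B w) (p w) xt u t = 0}.
Proof.
split.
  move=> H; exists (enorm u); split; first exact: enorm_gt0.
  apply: filterS H => w [hL [hM hip]].
  by apply/Qmx; apply: fwd => //; split.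
case=> t [ht H]; apply: filterS H => w /Qmx hQ.
by have [a [b c]] := bwd ht hQ; split.
Qed.
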